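(* Let $n\ge 2$ be an integer and $A\subseteq L_n$. (i) If $B\subseteq L_n\setminus A$ has cardinality continuum, then $B$ is not $z$-embedded in $(X_n,\tau(A))$. (ii) If $B\subseteq L_n\setminus A$ is a closed uncountable subset of $(L_n,\tau_E|_{L_n})$, then $L_n$ is not $z$-embedded in $(X_n,\tau(A))$.
   Context: For $\overline{x},\overline{a}\in\mathbb R^n$ let $|\overline{x}-\overline{a}|$ be the Euclidean distance and $B(\overline{a},\epsilon)=\{\overline{x}\in\mathbb R^n:|\overline{x}-\overline{a}|<\epsilon\}$. Let $P_n=\{\overline{x}\in\mathbb R^n: x_n>0\}$, $L_n=\{\overline{x}\in\mathbb R^n: x_n=0\}$, $X_n=P_n\cup L_n$, and let $\tau_E$ denote the Euclidean topology on $X_n$. For $\overline{a}\in L_n$ and $\epsilon>0$ put $\overline{a(\epsilon)}=(a_1,\dots,a_{n-1},\epsilon)$ and $\tilde B(\overline{a},\epsilon)=\{\overline{a}\}\cup B(\overline{a(\epsilon)},\epsilon)$. For $A\subseteq L_n$, the topology $\tau(A)$ on $X_n$ is generated by the local bases: at $\overline{a}\in P_n$, the sets $B(\overline{a},\epsilon)$ with $0<\epsilon<a_n$; at $\overline{a}\in A$, the sets $B(\overline{a},\epsilon)\cap X_n$ with $\epsilon>0$; at $\overline{a}\in L_n\setminus A$, the sets $\tilde B(\overline{a},\epsilon)$ with $\epsilon>0$. A subset $Y$ of a space $X$ is $z$-embedded in $X$ if every zero set of $Y$ is the trace on $Y$ of some zero set of $X$. *)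

(* Defs.v *)
From HB Require Import structures.
From mathcomp Require Import all_boot all_order all_algebra.
From mathcomp Require Import all_classical all_reals.
From mathcomp Require Import Rstruct.
From Stdlib Require Import Rdefinitions.
Set Implicit Arguments. Unset Strict Implicit. Unset Printing Implicit Defensive.
Import Order.TTheory GRing.Theory Num.Theory.
Local Open Scope classical_set_scope.
Local Open Scope ring_scope.

(* Points of R^n : coordinate functions on the index set {0,...,n-1}
   (coordinate x_k of the paper is x (k-1)). *)
Definition pt (n : nat) := 'I_n -> R.

Definition edist n (x a : pt n) : R := Num.sqrt (\sum_(i < n) (x i - a i) ^+ 2).

Definition ball_E n (a : pt n) (eps : R) : set (pt n) := [set x | edist x a < eps].

(* last coordinate x_n (0 in the degenerate case n = 0) *)
Definition lastc (n : nat) : pt n -> R :=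
  match n return pt n -> R with
  | 0 => fun _ => 0
  | m.+1 => fun x => x ord_max
  end.

Definition Pn n : set (pt n) := [set x | 0 < lastc x].
Definition Ln n : set (pt n) := [set x | lastc x = 0].
Arguments Pn : clear implicits.
Arguments Ln : clear implicits.
Definition Xn n : set (pt n) := Pn n `|` Ln n.
Arguments Pn : clear implicits.
Arguments Ln : clear implicits.
Arguments Xn : clear implicits.

Definition lift_pt n (a : pt n) (eps : R) : pt n :=
  fun i => if val i == n.-1 then eps else a i.

Definition tball n (a : pt n) (eps : R) : set (pt n) :=
  [set a] `|` ball_E (lift_pt a eps) eps.

(* The local base of tau(A) at a point a of X_n: V is a basic neighbourhood of a. *)
Definition basic_nbhd n (A : set (pt n)) (a : pt n) (V : set (pt n)) : Prop :=
  [/\ Pn n a -> exists2 eps, 0 < eps /\ eps < lastc a & V = ball_E a eps,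
      A a -> exists2 eps, 0 < eps & V = ball_E a eps `&` Xn n &
      (Ln n a /\ ~ A a) -> exists2 eps, 0 < eps & V = tball a eps].

(* f restricted to the subspace Y of (X_n, tau(A)) is continuous
   (continuity expressed through the local bases generating tau(A)). *)
Definition cont_on n (A : set (pt n)) (Y : set (pt n)) (f : pt n -> R) : Prop :=
  forall y, Y y -> forall e : R, 0 < e ->
    exists V, basic_nbhd A y V /\
      (forall z, V z -> Y z -> `|f z - f y| < e).

Definition zero_set n (A : set (pt n)) (Y Z : set (pt n)) : Prop :=
  exists f : pt n -> R, cont_on A Y f /\ Z = [set y | Y y /\ f y = 0].

Definition z_embedded n (A : set (pt n)) (Y : set (pt n)) : Prop :=
  forall Z, zero_set A Y Z ->
    exists2 Z', zero_set A (Xn n) Z' & Z = Z' `&` Y.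

Definition closed_in_Ln n (B : set (pt n)) : Prop :=
  B `<=` Ln n /\
  forall x, Ln n x -> (forall e : R, 0 < e -> exists2 b, B b & edist x b < e) -> B x.

(* Main.v *)
Require Import Defs.
From HB Require Import structures.
From mathcomp Require Import all_boot all_order all_algebra.
From mathcomp Require Import all_classical all_reals.
From mathcomp Require Import Rstruct.
From mathcomp Require Import ring lra.
From Stdlib Require Import Rdefinitions.
Import Order.TTheory GRing.Theory Num.Theory.
Local Open Scope classical_set_scope.
Local Open Scope ring_scope.
Set Implicit Arguments. Unset Strict Implicit. Unset Printing Implicit Defensive.
Section Scheme.
Variables (T X : Type) (B : set T) (good : X -> Prop) (step : X -> bool -> X)
  (reg : X -> set T) (root : X).

Fixpoint spath (a : nat -> bool) k : X :=
  if k is k'.+1 then step (spath a k') (a k') else root.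

Hypothesis good_root : good root.
Hypothesis good_step : forall x b, good x -> good (step x b).
Hypothesis disj : forall x, good x -> forall t, reg (step x true) t -> reg (step x false) t -> False.
Hypothesis lim : forall a, exists t, B t /\ forall k, reg (spath a k) t.

Lemma good_spath a k : good (spath a k).
Proof. by elim: k => //= k IH; apply: good_step. Qed.

Lemma scheme_inj : exists psi : (nat -> bool) -> T, (forall a, B (psi a)) /\ injective psi.
Proof.
have [psi hpsi] := choice lim.
exists psi; split; first by move=> a; case: (hpsi a).
move=> a b eab; apply/funext => k0; apply: contrapT => neq.
have ex : exists k, a k != b k by exists k0; apply/eqP.
case: (ex_minnP ex) => k /eqP hk hmin.
have same : forall j : nat, (j <= k)%nat -> spath a j = spath b j.
  elim=> // j IH hj /=; rewrite IH ?(ltnW hj) //.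
  congr step; apply/eqP; apply: contraT => hne.
  by have := hmin j hne; rewrite leqNgt hj.
case: (hpsi a) => _ /(_ k.+1) /= ra.
case: (hpsi b) => _ /(_ k.+1) /= rb.
rewrite -same // -eab in rb.
have g := good_spath a k.
move: ra rb hk; case: (a k); case: (b k) => ra rb hk //.
  exact: (disj g ra rb).
exact: (disj g rb ra).
Qed.
End Scheme.
Lemma mono_up (u : nat -> R) : (forall k, u k <= u k.+1) ->
  forall j k, (j <= k)%nat -> u j <= u k.
Proof.
move=> h j; elim=> [|k IH]; first by rewrite leqn0 => /eqP ->.
rewrite leq_eqVlt => /orP[/eqP -> //|]; rewrite ltnS => /IH hk.
exact: le_trans hk (h k).
Qed.

Lemma mono_down (u : nat -> R) : (forall k, u k.+1 <= u k) ->
  forall j k, (j <= k)%nat -> u k <= u j.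
Proof.
move=> h j k hjk; have := @mono_up (fun k => - u k) _ j k hjk.
by rewrite lerN2; apply=> i; rewrite lerN2.
Qed.

Lemma nested (a b : nat -> R) : (forall k, a k <= a k.+1) ->
  (forall k, b k.+1 <= b k) -> (forall k, a k <= b k) ->
  exists t, forall k, a k <= t /\ t <= b k.
Proof.
move=> ha hb hab.
have hjk : forall j k, a j <= b k.
  move=> j k; case: (leqP j k) => h.
    exact: le_trans (mono_up ha h) (hab k).
  exact: le_trans (hab j) (mono_down hb (ltnW h)).
have hs : has_sup (range a).
  split; first by exists (a 0%nat), 0%nat.
  by exists (b 0%nat) => _ [j _ <-]; apply: hjk.
exists (sup (range a)) => k; split.
  by apply: sup_upper_bound => //; exists k.
apply: ge_sup; first by exists (a 0%nat), 0%nat.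
by move=> _ [j _ <-]; apply: hjk.
Qed.

Definition rstep (x : R * R) (b : bool) : R * R :=
  if b then (x.1 + 2 * x.2 / 3, x.2 / 3) else (x.1, x.2 / 3).

Lemma cantor_R : exists psi : (nat -> bool) -> R, injective psi.
Proof.
have hgs : forall (x : R * R) b, 0 < x.2 -> 0 < (rstep x b).2.
  by move=> [a w] [] /= w0; lra.
have hd : forall x : R * R, 0 < x.2 -> forall t, x.1 + 2 * x.2 / 3 <= t <= x.1 + 2 * x.2 / 3 + x.2 / 3 -> x.1 <= t <= x.1 + x.2 / 3 -> False.
  by move=> [a w] /= w0 t; lra.
have hl : forall al, exists t, setT t /\ forall k, (spath rstep (0, 1) al k).1 <= t <= (spath rstep (0, 1) al k).1 + (spath rstep (0, 1) al k).2.
  move=> al.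
  have g : forall k, 0 < (spath rstep (0, 1) al k).2.
    elim=> [|k IH] /=; first lra.
    by case: (al k) => /=; lra.
  have [t ht] : exists t, forall k, (spath rstep (0, 1) al k).1 <= t /\ t <= (spath rstep (0, 1) al k).1 + (spath rstep (0, 1) al k).2.
    apply: nested => k /=; have := g k; try (case: (al k) => /=); lra.
  exists t; split => // k; have [h1 h2] := ht k; apply/andP; lra.
have [psi [_ h]] := @scheme_inj R (R * R) setT (fun x => 0 < x.2) rstep
  (fun x t => x.1 <= t <= x.1 + x.2) (0, 1) ltr01 hgs hd hl.
by exists psi.
Qed.
Lemma injR n (B : set (pt n)) : ([set: R] #= B)%card ->
  exists h : R -> pt n, (forall r, B (h r)) /\ injective h.
Proof.
rewrite card_eq_le => /andP[/card_leP [f] _].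
exists (fun r => \val (f (@exist _ _ r (mem_set (I : setT r))))).
split; first by move=> r; apply: set_mem; apply: valP.
move=> x y /val_inj /(@inj _ _ _ f).
move=> /(_ (mem_set I) (mem_set I)) [] //.
Qed.
Lemma arch (e : R) : 0 < e -> exists k : nat, 1 / k.+1%:R < e.
Proof.
move=> e0; have e0' : 0 <= e^-1 by rewrite invr_ge0 ltW.
have hk := archi_boundP e0'.
set k := Num.Def.archi_bound _ in hk.
exists k; rewrite ltr_pdivrMr ?ltr0Sn //.
have : e^-1 < k.+1%:R by apply: (lt_le_trans hk); rewrite ler_nat.
by rewrite -(ltr_pM2l e0) mulfV ?gt_eqF.
Qed.

Lemma sqrt_lt_iff (s e : R) : 0 < e -> (Num.sqrt s < e <-> s < e ^+ 2).
Proof.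
move=> e0; have -> : Num.sqrt s < e = (Num.sqrt s < Num.sqrt (e ^+ 2)).
  by rewrite sqrtr_sqr gtr0_norm.
by rewrite ltr_sqrt ?exprn_gt0.
Qed.

Lemma sum_sq_le n (x y : pt n) (dl : R) : (forall i, `|x i - y i| <= dl) ->
  \sum_(i < n) (x i - y i) ^+ 2 <= n%:R * dl ^+ 2.
Proof.
move=> h; have -> : n%:R * dl ^+ 2 = \sum_(i < n) dl ^+ 2.
  by rewrite sumr_const card_ord mulr_natl.
apply: ler_sum => i _; have := h i; rewrite ler_norml => /andP[h1 h2]; nra.
Qed.

Lemma edist_lt n (x y : pt n) (dl e : R) : (forall i, `|x i - y i| <= dl) ->
  0 <= dl -> dl * n%:R < e -> edist x y < e.
Proof.
move=> h d0 hd; have e0 : 0 < e by have := mulr_ge0 d0 (ler0n R n); lra.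
rewrite /edist sqrt_lt_iff //; apply: le_lt_trans (sum_sq_le h) _.
have hn : n%:R <= n%:R ^+ 2 :> R.
  case: n {x y h hd} => [|k]; first by rewrite expr0n.
  by rewrite expr2 ler_pMl ?ltr0Sn // ler1n.
have hsq : (dl * n%:R) ^+ 2 < e ^+ 2.
  by have := mulr_ge0 d0 (ler0n R n); nra.
apply: le_lt_trans hsq; rewrite exprMn mulrC; have := sqr_ge0 dl; nra.
Qed.

Lemma edistC n (x y : pt n) : edist x y = edist y x.
Proof. by rewrite /edist; congr Num.sqrt; apply: eq_bigr => i _; rewrite -sqrrN opprB. Qed.

Section Tangent.
Variable m : nat.
Local Notation pm := (pt m.+1).

Definition tb (b : pm) (mu : R) := ball_E (lift_pt b mu) mu.
Definition Sp (b x : pm) := \sum_(i < m) (x (widen_ord (leqnSn m) i) - b (widen_ord (leqnSn m) i)) ^+ 2.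

Lemma Sp_ge0 b x : 0 <= Sp b x.
Proof. by apply: sumr_ge0 => i _; apply: sqr_ge0. Qed.

Lemma tb_iff b x mu : 0 < mu -> (tb b mu x <-> Sp b x + x ord_max ^+ 2 < 2 * mu * x ord_max).
Proof.
move=> mu0; rewrite /tb /ball_E /edist /= sqrt_lt_iff // big_ord_recr /=.
have -> : \sum_(i < m) (x (widen_ord (leqnSn m) i) - lift_pt b mu (widen_ord (leqnSn m) i)) ^+ 2 = Sp b x.
  apply: eq_bigr => i _; rewrite /lift_pt /=.
  by have := ltn_ord i; rewrite ltn_neqAle => /andP[/negPf -> _].
rewrite /lift_pt /= eqxx.
split => h; nra.
Qed.

Lemma tb_pos b x mu : 0 < mu -> tb b mu x -> 0 < x ord_max.
Proof. move=> mu0 /(tb_iff _ _ mu0) h; have := Sp_ge0 b x; nra. Qed.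

Lemma tb_nest b x mu eps : 0 < mu -> mu <= eps -> tb b mu x -> tb b eps x.
Proof.
move=> mu0 me hx; have xp := tb_pos mu0 hx.
move/(tb_iff _ _ mu0): hx => hx; apply/(tb_iff _ _ (lt_le_trans mu0 me)); nra.
Qed.
End Tangent.
Lemma abs_small0 (x : R) : (forall k : nat, `|x| <= 1 / k.+1%:R) -> x = 0.
Proof.
move=> h; apply/eqP; apply: contraT => hx.
have /arch [k hk] : 0 < `|x| by rewrite normr_gt0.
by have := h k; rewrite leNgt hk.
Qed.

Definition ratv n (q : {ffun 'I_n -> rat}) : pt n := fun i => ratr (q i).

Lemma ratv_approx n (x : pt n) (dl : R) : 0 < dl ->
  exists q : {ffun 'I_n -> rat}, forall i, `|ratv q i - x i| < dl.
Proof.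
move=> d0.
have h : forall i : 'I_n, exists q : rat, `|ratr q - x i| < dl.
  move=> i; have hx : x i < x i + dl by lra.
  have [q] := rat_in_itvoo hx.
  rewrite in_itv /= => /andP[h1 h2]; exists q.
  by rewrite ltr_norml; apply/andP; split; lra.
have [f hf] := choice h.
by exists [ffun i => f i] => i; rewrite /ratv ffunE.
Qed.

Definition dseq n (j : nat) : pt n :=
  if @unpickle {ffun 'I_n -> rat} j is Some q then ratv q else fun _ => 0.

Lemma dseq_approx n (x : pt n) (dl : R) : 0 < dl ->
  exists j, forall i, `|@dseq n j i - x i| < dl.
Proof.
move=> /(ratv_approx x) [q hq]; exists (pickle q).
by rewrite /dseq pickleK.
Qed.

Lemma tb_dense m (b : pt m.+1) mu : 0 < mu -> exists j, tb b mu (@dseq m.+1 j).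
Proof.
move=> mu0.
have d0 : 0 < mu / (2 * m.+1%:R) by rewrite divr_gt0 // mulr_gt0 // ltr0Sn.
have [j hj] := dseq_approx (lift_pt b mu) d0.
exists j; rewrite /tb /ball_E.
apply: (@edist_lt _ _ _ (mu / (2 * m.+1%:R))).
- by move=> i; apply: ltW.
- exact: ltW.
have k0 : m.+1%:R != 0 :> R by rewrite pnatr_eq0.
have -> : mu / (2 * m.+1%:R) * m.+1%:R = mu / 2.
  by rewrite invfM mulrA -mulrA mulVf // mulr1.
lra.
Qed.

Section Trace.
Variable m : nat.
Local Notation pm := (pt m.+1).
Variable A : set pm.

Lemma cont_tb (g : pm -> R) b : cont_on A (Xn m.+1) g -> Ln m.+1 b -> ~ A b ->
  forall e, 0 < e -> exists eps, 0 < eps /\ forall z, tb b eps z -> `|g z - g b| < e.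
Proof.
move=> hc hL hA e e0.
have hX : Xn m.+1 b by right.
have [V [hV hVz]] := hc b hX e e0.
case: hV => _ _ /(_ (conj hL hA)) [eps eps0 hVe].
exists eps; split => // z hz; apply: hVz; first by rewrite hVe; right.
by left; exact: (tb_pos eps0 hz).
Qed.

Lemma trace (g : pm -> R) b : cont_on A (Xn m.+1) g -> Ln m.+1 b -> ~ A b ->
  (g b = 0 <-> forall k mm : nat, exists j,
     `|g (@dseq m.+1 j)| < 1 / k.+1%:R /\ tb b (1 / mm.+1%:R) (@dseq m.+1 j)).
Proof.
move=> hc hL hA; have key := cont_tb hc hL hA.
split.
- move=> gb0 k mm.
  have [eps [eps0 heps]] := key (1 / k.+1%:R) (divr_gt0 ltr01 (ltr0Sn _ _)).
  have p0 : 0 < 1 / mm.+1%:R :> R by apply: divr_gt0 => //; apply: ltr0Sn.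
  have mu0 : 0 < Num.min eps (1 / mm.+1%:R) by rewrite lt_min eps0 p0.
  have [j hj] := tb_dense b mu0.
  have hm1 : Num.min eps (1 / mm.+1%:R) <= eps by rewrite ge_min lexx.
  have hm2 : Num.min eps (1 / mm.+1%:R) <= 1 / mm.+1%:R by rewrite ge_min lexx orbT.
  exists j; split.
    have := heps _ (tb_nest mu0 hm1 hj).
    by rewrite gb0 subr0.
  exact: (tb_nest mu0 hm2 hj).
- move=> h; apply: contrapT => gb.
  have e0 : 0 < `|g b| / 2 by rewrite divr_gt0 // normr_gt0; apply/eqP.
  have [eps [eps0 heps]] := key _ e0.
  have [k hk] := arch e0; have [mm hmm] := arch eps0.
  have [j [hj1 hj2]] := h k mm.
  have p0 : 0 < 1 / mm.+1%:R :> R by apply: divr_gt0 => //; apply: ltr0Sn.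
  have := heps _ (tb_nest p0 (ltW hmm) hj2).
  have := ler_distD (g (@dseq m.+1 j)) (g b) 0.
  rewrite subr0 subr0 distrC => h1 h2.
  have := le_lt_trans h1 (ltrD h2 (lt_trans hj1 hk)).
  by rewrite -splitr ltxx.
Qed.
End Trace.

Lemma core m (A B : set (pt m.+1)) (psi : (nat -> bool) -> pt m.+1) :
  B `<=` Ln m.+1 `\` A -> (forall a, B (psi a)) -> injective psi ->
  (forall S, S `<=` B -> exists g, cont_on A (Xn m.+1) g /\
      forall b, B b -> (S b <-> g b = 0)) -> False.
Proof.
move=> hB hpsi hinj H.
pose Phi (al : nat -> bool) (b : pt m.+1) := forall k mm : nat, exists j : nat,
  al (pickle (j, k)) /\ tb b (1 / mm.+1%:R) (@dseq m.+1 j).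
pose code (g : pt m.+1 -> R) (i : nat) : bool :=
  if @unpickle (nat * nat)%type i is Some (j, k)
  then `[< `|g (@dseq m.+1 j)| < 1 / k.+1%:R >] else false.
have hcode : forall g, cont_on A (Xn m.+1) g -> forall b, B b ->
    (Phi (code g) b <-> g b = 0).
  move=> g hg b Bb; have [hL hA] := hB b Bb.
  rewrite (trace hg hL hA) /Phi /code.
  split => h k mm; have [j [h1 h2]] := h k mm; exists j; split => //.
    by move: h1; rewrite pickleK => /asboolP.
  by rewrite pickleK; apply/asboolP.
pose D := [set al | ~ Phi al (psi al)].
have [g [hg hS]] : exists g, cont_on A (Xn m.+1) g /\ forall b, B b -> ((psi @` D) b <-> g b = 0).
  by apply: H => _ [a _ <-].
set c := code g.
have e1 : (psi @` D) (psi c) <-> D c.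
  split; first by case=> a Da /hinj <-.
  by move=> Dc; exists c.
have e2 : D c <-> ~ g (psi c) = 0.
  split => h h0; apply: h; [exact/(hcode g hg _ (hpsi c)) | exact/(hcode g hg _ (hpsi c))].
have e3 := hS _ (hpsi c).
case: (pselect (D c)) => Dc.
  by apply: (e2.1 Dc); apply/e3/e1.
apply: (Dc); apply/e1; apply/e3; apply: contrapT => hn; apply: (Dc); exact: e2.2 hn.
Qed.

Lemma tball_Ln m (y z : pt m.+1) eps : 0 < eps -> tball y eps z -> Ln m.+1 z -> z = y.
Proof.
move=> e0 [hzy|hz] hL; first by [].
have := tb_pos e0 hz; move: hL; rewrite /Ln /= => ->; by rewrite ltxx.
Qed.

Lemma Pn_Ln m (y : pt m.+1) : Pn m.+1 y -> Ln m.+1 y -> False.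
Proof. by move=> hP hL; move: hP; rewrite /Ln /= in hL; rewrite /Pn /= hL ltxx. Qed.

Definition indf n (S : set (pt n)) (y : pt n) : R := if `[< S y >] then 0 else 1.

Lemma indf0 n (S : set (pt n)) y : (indf S y = 0) <-> S y.
Proof.
rewrite /indf; case: asboolP => // nS; split => h.
  by have := oner_neq0 R; rewrite h eqxx.
by case: (nS h).
Qed.

Lemma part_i m (A B : set (pt m.+1)) : B `<=` Ln m.+1 `\` A ->
  (B #= [set: R])%card -> ~ z_embedded A B.
Proof.
move=> hB hc hz.
have [h [hhB hhinj]] := injR (card_esym hc).
have [psi hpsi] := cantor_R.
apply: (@core m A B (h \o psi) hB (fun a => hhB (psi a))); first by move=> a b /hhinj /hpsi.
move=> S SB.
have zS : zero_set A B S.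
  exists (indf S); split.
  - move=> y By e e0; have [hL hA] := hB y By.
    exists (tball y 1); split.
      split; [by move=> hP; exfalso; exact: Pn_Ln hP hL | by move=> /hA | by exists 1].
    move=> z hzz Bz; rewrite (tball_Ln ltr01 hzz (hB z Bz).1).
    by rewrite subrr normr0.
  - apply/seteqP; split => y /=.
    + by move=> Sy; split; [exact: SB | apply/indf0].
    + by move=> [_ /indf0].
have [Z' [g [hg hZ']] hZ] := hz S zS.
exists g; split => // b Bb.
rewrite hZ hZ' /=; split; first by move=> [[_ ->]].
by move=> e; split => //; split => //; right; exact: (hB b Bb).1.
Qed.

Definition cbox n (c : pt n) (r : R) : set (pt n) := [set y | forall i, `|y i - c i| <= r].
Definition Kc n (B : set (pt n)) : set (pt n) :=
  [set x | B x /\ forall r, 0 < r -> ~ countable (B `&` cbox x r)].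

Lemma countableU2 T (X Y : set T) : countable X -> countable Y -> countable (X `|` Y).
Proof.
move=> cX cY.
have -> : X `|` Y = \bigcup_(i in [set: bool]) (if i then X else Y).
  apply/seteqP; split => x.
    by case=> h; [exists true | exists false].
  by case=> -[] _ h; [left | right].
by apply: bigcup_countable; [exact: countableP | case].
Qed.

Lemma BK_countable n (B : set (pt n)) : countable (B `\` Kc B).
Proof.
pose F (i : {ffun 'I_n -> rat} * nat) := B `&` cbox (ratv i.1) (1 / i.2.+1%:R).
pose G := [set i | countable (F i)].
apply: (@sub_countable _ _ _ (\bigcup_(i in G) F i)); last first.
  by apply: bigcup_countable; [exact: countableP | move=> i].
apply: subset_card_le => x [Bx nK].
have [r [r0 hr]] : exists r, 0 < r /\ countable (B `&` cbox x r).
  apply: contrapT => hn; apply: nK; split => // r r0 hc; apply: hn; by exists r.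
have r20 : 0 < r / 2 by rewrite divr_gt0.
have [N hN] := arch r20.
have N0 : 0 < 1 / N.+1%:R :> R by apply: divr_gt0 => //; apply: ltr0Sn.
have [q hq] := ratv_approx x N0.
exists (q, N).
- rewrite /G /=; apply: (sub_countable _ hr); apply: subset_card_le => y [By hy].
  split => // i; simpl in hy; have h1 := hy i; have h2 := hq i.
  have h3 := ler_distD (ratv q i) (y i) (x i).
  apply: (le_trans h3); apply: (le_trans (lerD h1 (ltW h2))).
  have h4 := ltrD hN hN; rewrite -splitr in h4; exact: (ltW h4).
- split => // i /=; rewrite distrC; exact: ltW (hq i).
Qed.

Lemma K_nonempty n (B : set (pt n)) : ~ countable B -> exists c, Kc B c.
Proof.
move=> hB; apply: contrapT => hn; apply: hB.
apply: (sub_countable _ (BK_countable B)); apply: subset_card_le => y By.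
by split => // Ky; apply: hn; exists y.
Qed.

Lemma K_two n (B : set (pt n)) c r : Kc B c -> 0 < r -> exists y0 y1,
  [/\ y0 <> y1, Kc B y0, Kc B y1, cbox c r y0 & cbox c r y1].
Proof.
move=> [Bc hc] r0; have hu := hc r r0.
apply: contrapT => hn; apply: hu.
case: (pselect (exists y0, Kc B y0 /\ cbox c r y0)) => [[y0 [Ky0 cy0]]|hno].
- apply: (sub_countable _ (countableU2 (BK_countable B) (countable1 y0))).
  apply: subset_card_le => y [By cy]; case: (pselect (Kc B y)) => Ky.
    right; apply: contrapT => ne; apply: hn; exists y, y0; split => //.
  by left; split.
- apply: (sub_countable _ (BK_countable B)); apply: subset_card_le => y [By cy].
  by split => // Ky; apply: hno; exists y.
Qed.

Definition goodn n (B : set (pt n)) (x : pt n * R) := Kc B x.1 /\ 0 < x.2.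
Definition within n (x' x : pt n * R) := forall i, `|x'.1 i - x.1 i| + x'.2 <= x.2.

Lemma step_ex n (B : set (pt n)) (x : pt n * R) :
  exists ch : (pt n * R) * (pt n * R), goodn B x ->
  [/\ goodn B ch.1, goodn B ch.2, within ch.1 x /\ within ch.2 x,
      ch.1.2 <= x.2 / 2 /\ ch.2.2 <= x.2 / 2 &
      forall t, cbox ch.1.1 ch.1.2 t -> cbox ch.2.1 ch.2.2 t -> False].
Proof.
case: (pselect (goodn B x)) => gx; last by exists (x, x).
case: x gx => c r [Kcc r0] /=.
have r20 : 0 < r / 2 by rewrite divr_gt0.
have [y0 [y1 [ne K0 K1 c0 c1]]] := K_two Kcc r20.
have [i hi] : exists i, y0 i != y1 i.
  apply: contrapT => hn; apply: ne; apply/funext => i; apply/eqP.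
  by apply: contrapT => h; apply: hn; exists i; apply/negP.
have dl0 : 0 < `|y0 i - y1 i| by rewrite normr_gt0 subr_eq0.
have d30 : 0 < `|y0 i - y1 i| / 3 by rewrite divr_gt0.
pose r' := Num.min (r / 2) (`|y0 i - y1 i| / 3).
have r'0 : 0 < r' by rewrite lt_min r20 d30.
have r'1 : r' <= r / 2 by rewrite ge_min lexx.
have r'2 : r' <= `|y0 i - y1 i| / 3 by rewrite ge_min lexx orbT.
exists ((y0, r'), (y1, r')) => _ /=; split => //.
- split => j /=.
    have := c0 j; move=> h; have h' := lerD h r'1; rewrite -splitr in h'; exact: h'.
  have := c1 j; move=> h; have h' := lerD h r'1; rewrite -splitr in h'; exact: h'.
- move=> t h0 h1; have := h0 i; have := h1 i => a1 a0.
  have h3 := ler_distD (t i) (y0 i) (y1 i).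
  rewrite distrC in a0.
  have h4 := le_trans h3 (lerD a0 a1).
  have h5 := lerD r'2 r'2.
  have h6 := le_trans h4 h5.
  move: h6; set u := `|y0 i - y1 i|; move=> h6.
  have : u <= u / 3 + u / 3 by [].
  lra.
Qed.

Lemma perfect_inj m (B : set (pt m.+1)) : closed_in_Ln B -> ~ countable B ->
  exists psi : (nat -> bool) -> pt m.+1, (forall a, B (psi a)) /\ injective psi.
Proof.
move=> [BL Bcl] hunc.
have [ch hch] := choice (step_ex B).
pose st (x : pt m.+1 * R) (b : bool) := if b then (ch x).1 else (ch x).2.
have [c Kcc] := K_nonempty hunc.
have groot : goodn B (c, 1) by split => //=; exact: ltr01.
have gstep : forall x b, goodn B x -> goodn B (st x b).
  by move=> x [] gx; have [g1 g2 _ _ _] := hch x gx.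
have gdisj : forall x, goodn B x -> forall t, cbox (st x true).1 (st x true).2 t ->
    cbox (st x false).1 (st x false).2 t -> False.
  by move=> x gx t; have [_ _ _ _ h] := hch x gx; apply: h.
apply: (@scheme_inj _ _ B (goodn B) st (fun x => cbox x.1 x.2) (c, 1) groot gstep gdisj).
move=> al; pose p := spath st (c, 1) al.
have gp : forall k, goodn B (p k).
  by elim=> //= k IH; apply: gstep.
have wp : forall k, within (p k.+1) (p k) /\ (p k.+1).2 <= (p k).2 / 2.
  move=> k; have [_ _ [w1 w2] [s1 s2] _] := hch _ (gp k).
  by rewrite /p /=; case: (al k) => /=.
have rk : forall k, (p k).2 * k.+1%:R <= 1.
  elim=> [|k IH]; first by rewrite /= mulr1.
  have [_ h] := wp k; have [_ q0] := gp k; have [_ q1] := gp k.+1.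
  move: IH h q0 q1; rewrite -[k.+2]addn1 -[k.+1]addn1 !natrD.
  have := ler0n R k; set K := k%:R; set a := (p k).2; set b := (p k.+1).2.
  move=> k0 h1 h2 h3 h4; nra.
have rk' : forall k, (p k).2 <= 1 / k.+1%:R.
  by move=> k; rewrite ler_pdivlMr ?ltr0Sn // rk.
have hnest : forall i, exists ti, forall k, (p k).1 i - (p k).2 <= ti /\ ti <= (p k).1 i + (p k).2.
  move=> i; apply: nested => k.
  - have [w _] := wp k; have := w i; rewrite /= => h.
    have := ler_norml ((p k.+1).1 i - (p k).1 i) ((p k).2 - (p k.+1).2).
    rewrite -lerBrDr in h; rewrite h => /esym /andP[h1 h2]; lra.
  - have [w _] := wp k; have := w i; rewrite /= => h.
    have := ler_norml ((p k.+1).1 i - (p k).1 i) ((p k).2 - (p k.+1).2).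
    rewrite -lerBrDr in h; rewrite h => /esym /andP[h1 h2]; lra.
  - have [_ h] := gp k; lra.
have [t ht] := choice hnest.
have tc : forall k i, `|t i - (p k).1 i| <= (p k).2.
  move=> k i; have [h1 h2] := ht i k; rewrite ler_norml; apply/andP; split; lra.
exists t; split; last by move=> k i; exact: tc.
have Lt : Ln m.+1 t.
  rewrite /Ln /=; apply: abs_small0 => k.
  have [[Bk _] _] := gp k; have := BL _ Bk; rewrite /Ln /= => e.
  have := tc k ord_max; rewrite e subr0 => h; exact: le_trans h (rk' k).
apply: Bcl => // e e0.
have em : 0 < e / m.+1%:R by rewrite divr_gt0 // ltr0Sn.
have [k hk] := arch em.
have [[Bk _] q0] := gp k.
exists (p k).1 => //.
apply: (@edist_lt _ _ _ (p k).2); [exact: tc | exact: ltW |].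
rewrite -ltr_pdivlMr ?ltr0Sn //; exact: le_lt_trans (rk' k) hk.
Qed.

Lemma part_ii m (A B : set (pt m.+1)) : B `<=` Ln m.+1 `\` A -> closed_in_Ln B ->
  ~ countable B -> ~ z_embedded A (Ln m.+1).
Proof.
move=> hB hcl hunc hz.
have [psi [hpsi hinj]] := perfect_inj hcl hunc.
apply: (core hB hpsi hinj) => S SB.
have zS : zero_set A (Ln m.+1) S.
  exists (indf S); split.
  - move=> y Ly e e0.
    case: (pselect (A y)) => Ay.
    + have nBy : ~ B y by move=> /hB [].
      have [e1 [e10 he1]] : exists e1, 0 < e1 /\ forall b, B b -> e1 <= edist y b.
        apply: contrapT => hn; apply: nBy; apply: hcl.2 => // e2 e20.
        apply: contrapT => hn2; apply: hn; exists e2; split => // b Bb.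
        rewrite leNgt; apply/negP => hlt; apply: hn2; by exists b.
      exists (ball_E y e1 `&` Xn m.+1); split.
        split; [by move=> hP; exfalso; exact: Pn_Ln hP Ly | by move=> _; exists e1 | by case].
      move=> z [hzb _] Lz.
      have nSz : ~ S z by move=> /SB Bz; have := he1 z Bz; rewrite edistC leNgt hzb.
      have nSy : ~ S y by move=> /SB /hB [].
      by rewrite /indf (asboolF nSz) (asboolF nSy) subrr normr0.
    + exists (tball y 1); split.
        split; [by move=> hP; exfalso; exact: Pn_Ln hP Ly | by [] | by exists 1].
      move=> z hzz Lz; rewrite (tball_Ln ltr01 hzz Lz); by rewrite subrr normr0.
  - apply/seteqP; split => y /=.
    + by move=> Sy; split; [exact: (hB _ (SB _ Sy)).1 | apply/indf0].
    + by move=> [_ /indf0].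
have [Z' [g [hg hZ']] hZ] := hz S zS.
exists g; split => // b Bb.
rewrite hZ hZ' /=; split; first by move=> [[_ ->]].
by move=> e; split; [split => //; right | ]; exact: (hB b Bb).1.
Qed.

Unset Implicit Arguments.

Theorem mainTheorem9 (n : nat) (A : set (pt n)) :
  leq 2 n -> A `<=` Ln n ->
  (forall B : set (pt n), B `<=` Ln n `\` A ->
     (B #= [set: R])%card -> ~ z_embedded A B) /\
  (forall B : set (pt n), B `<=` Ln n `\` A ->
     closed_in_Ln B -> ~ countable B -> ~ z_embedded A (Ln n)).
Proof.
case: n A => [|[|m]] A //= _ _.
split => B; [exact: part_i | exact: part_ii].
Qed.
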